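(* Let $K,L,T$ be positive integers with $L\le K$, let $\varphi=T-1-KL+2K$, and for $r\in\{1,\ldots,\min\{K,T\}\}$ let $N(r)$ be the number of distinct integers in $\operatorname{Set}(\alpha)+\operatorname{Set}(\beta)$ for the $\mathsf{GASP}_r$ vectors $(\alpha,\beta)$. Suppose $\varphi\ge1$. Then for every integer $r$ with $1\le r\le\min\{K,T,\varphi\}$ we have $N(\min\{K,T,\varphi\})\le N(r)$.
   Context: The code $\mathsf{GASP}_r$ ($L\le K$, $1\le r\le\min\{K,T\}$) consists of $\alpha=(\alpha_{\mathrm p}\mid\alpha_{\mathrm s})$, $\beta=(\beta_{\mathrm p}\mid\beta_{\mathrm s})$ with $\alpha_{\mathrm p}=(0,1,\ldots,K-1)$; $\alpha_{\mathrm s}$ the $T$ smallest elements of $\{KL+j+Kt: 0\le j\le r-1,\ t\in\mathbb{Z}_{\ge0}\}$ in increasing order; $\beta_{\mathrm p}=(0,K,\ldots,K(L-1))$; $\beta_{\mathrm s}=(KL,\ldots,KL+T-1)$. $\operatorname{Set}(v)$ is the set of entries of $v$, $A+B=\{a+b\}$. *)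

(* Defs.v *)
From mathcomp Require Import all_boot.

Definition alpha_p (K : nat) : seq nat := iota 0 K.

(* membership in {KL + j + K t : 0 <= j <= r-1, t >= 0} *)
Definition in_alpha_s_set (K L r n : nat) : bool :=
  (K * L <= n) && ((n - K * L) %% K < r).

(* the T smallest elements of that set, in increasing order.  All of them lie
   in [KL, KL + KT) since j = 0, t = 0..T-1 already gives T elements there. *)
Definition alpha_s (K L T r : nat) : seq nat :=
  take T [seq n <- iota (K * L) (K * T) | in_alpha_s_set K L r n].

Definition alpha (K L T r : nat) : seq nat := alpha_p K ++ alpha_s K L T r.

Definition beta_p (K L : nat) : seq nat := [seq K * i | i <- iota 0 L].
Definition beta_s (K L T : nat) : seq nat := iota (K * L) T.
Definition beta (K L T : nat) : seq nat := beta_p K L ++ beta_s K L T.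

Definition N_GASP (K L T r : nat) : nat :=
  size (undup [seq a + b | a <- alpha K L T r, b <- beta K L T]).

(* Main.v *)
Require Import Defs.
From mathcomp Require Import all_boot.
From mathcomp Require Import all_boot zify.

Lemma mem_tfi (p : pred nat) T m n x :
  (x \in take T [seq y <- iota m n | p y]) =
  [&& m <= x, x < m + n, p x & count p (iota m (x - m)) < T].
Proof.
case: (boolP ((m <= x) && (x < m + n))) => [/andP[h1 h2]|h]; last first.
  have -> : [&& m <= x, x < m + n, p x & count p (iota m (x - m)) < T] = false.
    by move: h; case: (m <= x); case: (x < m + n).
  apply/negbTE/negP => /mem_take; rewrite mem_filter mem_iota => /andP[_ H].
  by case/negP: h.
rewrite h1 h2 /=.
have -> : n = (x - m) + (n - (x - m)).-1.+1 by lia.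
rewrite iotaD (subnKC h1) filter_cat /=.
rewrite -size_filter.
set l1 := [seq y <- iota m (x - m) | p y].
have nx1 : x \notin l1 by rewrite /l1 mem_filter mem_iota (subnKC h1) ltnn !andbF.
have nx2 : x \notin [seq y <- iota x.+1 (n - (x - m)).-1 | p y]
  by rewrite mem_filter mem_iota ltnn andbF.
rewrite take_cat; case: ltnP => hT.
  rewrite ltnNge (ltnW hT) andbF.
  apply/negbTE/negP => /mem_take H; by rewrite H in nx1.
rewrite mem_cat (negbTE nx1) /=.
case px: (p x) => /=.
  case E: (T - size l1) => [|k] /=.
    by rewrite in_nil ltnNge (_ : T <= size l1) //; lia.
  have -> : size l1 < T by lia.
  by rewrite in_cons eqxx.
apply/negbTE/negP => /mem_take H; by rewrite H in nx2.
Qed.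

Definition cnt K L r x := count (in_alpha_s_set K L r) (iota (K * L) (x - K * L)).

Lemma mem_as K L T r x : (x \in alpha_s K L T r) =
  [&& K * L <= x, x < K * L + K * T, in_alpha_s_set K L r x & cnt K L r x < T].
Proof. by rewrite /alpha_s mem_tfi. Qed.

Lemma cnt_mono K L r x y : x <= y -> cnt K L r x <= cnt K L r y.
Proof.
move=> h; rewrite /cnt.
have -> : y - K * L = (x - K * L) + (y - K * L - (x - K * L)) by lia.
by rewrite iotaD count_cat leq_addr.
Qed.

Lemma cnt_strict K L r x y : in_alpha_s_set K L r x -> K * L <= x -> x < y ->
  cnt K L r x < cnt K L r y.
Proof.
move=> px h1 h; rewrite /cnt.
have -> : y - K * L = (x - K * L) + (y - x).-1.+1 by lia.
rewrite iotaD count_cat (subnKC h1) /= px.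
by rewrite add1n addnS ltnS leq_addr.
Qed.

Lemma cnt_r K L r x : cnt K L r x <= cnt K L r.+1 x.
Proof.
apply: sub_count => n; rewrite /in_alpha_s_set => /andP[-> h] /=.
exact: ltn_trans h _.
Qed.

Lemma P_r {K L r x} : in_alpha_s_set K L r x -> in_alpha_s_set K L r.+1 x.
Proof. rewrite /in_alpha_s_set => /andP[-> h] /=; exact: ltn_trans h _. Qed.

Lemma cnt_full K L T r : 0 < K -> 0 < r ->
  T <= count (in_alpha_s_set K L r) (iota (K * L) (K * T)).
Proof.
move=> hK hr; elim: T => [|T IH] //.
rewrite mulnS addnC iotaD count_cat.
have : 0 < count (in_alpha_s_set K L r) (iota (K * L + K * T) K).
  rewrite -has_count; apply/hasP; exists (K * L + K * T).
    by rewrite mem_iota leqnn /=; lia.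
  by rewrite /in_alpha_s_set leq_addr addKn modnMr.
lia.
Qed.

Lemma size_as K L T r : 0 < K -> 0 < r -> size (alpha_s K L T r) = T.
Proof.
move=> hK hr; rewrite /alpha_s size_take size_filter.
have h2 := @cnt_full K L T r hK hr; case: ltnP => // h1; apply/eqP; rewrite eqn_leq h1 /=; exact: h2.
Qed.

Lemma uniq_as K L T r : uniq (alpha_s K L T r).
Proof. by apply: take_uniq; apply: filter_uniq; apply: iota_uniq. Qed.

Lemma count_mem_sym (s t : seq nat) : uniq s -> uniq t ->
  count (mem s) t = count (mem t) s.
Proof.
move=> us ut; rewrite -!size_filter; apply: perm_size; apply: uniq_perm.
- exact: filter_uniq.
- exact: filter_uniq.
by move=> x; rewrite !mem_filter andbC.
Qed.

Lemma size_undup_sub (s t : seq nat) : {subset s <= t} -> size (undup s) <= size (undup t).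
Proof.
move=> h; apply: uniq_leq_size; first exact: undup_uniq.
by move=> x; rewrite !mem_undup; apply: h.
Qed.

Lemma size_undup_cat (s t : seq nat) : size (undup (s ++ t)) <= size s + size (undup t).
Proof.
rewrite undup_cat size_cat leq_add2r.
rewrite size_filter; apply: leq_trans (count_size _ _) _.
exact: size_undup.
Qed.

Lemma Pz K L r t j : j < r -> j < K -> in_alpha_s_set K L r (K * L + t * K + j).
Proof.
move=> hj hjK; rewrite /in_alpha_s_set -addnA leq_addr /= addKn.
by rewrite modnMDl modn_small.
Qed.

Lemma step K L T r : 0 < K -> 0 < L -> 0 < r -> r < K -> r < T ->
  K * L + r + 2 <= T + 2 * K -> N_GASP K L T r.+1 <= N_GASP K L T r.
Proof.
move=> hK hL hr hrK hrT hphi.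
set s0 := alpha_s K L T r. set s1 := alpha_s K L T r.+1. set B := beta K L T.
set A' := alpha_p K ++ [seq x <- s0 | x \in s1].
set C := [seq x <- s1 | x \notin s0].
set R := [seq x <- s0 | x \notin s1].
set mB := K * L + T - 1.
have memB b : (b \in B) = ((b \in beta_p K L) || (K * L <= b < K * L + T)).
  by rewrite mem_cat mem_iota.
have F1 x : x \in s1 -> in_alpha_s_set K L r x -> x \in s0.
  rewrite /s1 /s0 !mem_as => /and4P[a b c d] p; rewrite a b p /=.
  exact: leq_ltn_trans (cnt_r _ _ _ _) d.
have F2 x z : x \in s0 -> x \notin s1 -> z \in s1 -> z < x.
  rewrite /s0 /s1 !mem_as => /and4P[a b c d] H /and4P[_ _ _ d'].
  rewrite a b (P_r c) /= -leqNgt in H.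
  rewrite ltnNge; apply/negP => hxz.
  have := @cnt_mono K L r.+1 _ _ hxz; lia.
have F3 c z : c \in s1 -> K * L <= z <= c -> in_alpha_s_set K L r z -> z \in A'.
  move=> hc /andP[z1 z2] pz.
  have hz1 : z \in s1.
    move: hc; rewrite /s1 !mem_as => /and4P[a b _ d].
    rewrite z1 (P_r pz) /=; apply/andP; split; first lia.
    exact: leq_ltn_trans (@cnt_mono _ _ _ _ _ z2) d.
  by rewrite mem_cat mem_filter hz1 F1 // orbT.
have Claim1 : {subset [seq a + b | a <- alpha_p K ++ s1, b <- B] <=
    [seq c + mB | c <- C] ++ [seq a + b | a <- A', b <- B]}.
  move=> x /allpairsP[[a b] [/= Ha Hb ->]].
  have inS a0 b0 : a0 \in A' -> b0 \in B ->
      a0 + b0 \in [seq c + mB | c <- C] ++ [seq a + b | a <- A', b <- B].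
    by move=> h1 h2; rewrite mem_cat (allpairs_f _ h1 h2) orbT.
  rewrite mem_cat in Ha; case/orP: Ha => Ha.
    by apply: inS => //; rewrite mem_cat Ha.
  case: (boolP (a \in s0)) => Ha0.
    by apply: inS => //; rewrite mem_cat mem_filter Ha Ha0 orbT.
  have aC : a \in C by rewrite mem_filter Ha0 Ha.
  have npa : ~~ in_alpha_s_set K L r a.
    by apply/negP => /(F1 _ Ha); rewrite (negbTE Ha0).
  have pa : in_alpha_s_set K L r.+1 a by move: Ha; rewrite /s1 mem_as => /and4P[].
  move: npa pa; rewrite /in_alpha_s_set => npa /andP[a1 a2].
  rewrite a1 /= -leqNgt in npa.
  have amod : (a - K * L) %% K = r by lia.
  set t := (a - K * L) %/ K.
  have ae : a = K * L + t * K + r.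
    by have := divn_eq (a - K * L) K; rewrite amod -/t; lia.
  rewrite memB in Hb; case/orP: Hb => Hb.
  - case/mapP: Hb => i; rewrite mem_iota => /andP[_ hi] ->.
    case: (leqP L (t + i)) => hti.
    + have e1 : (t + i - L) * K + K * L = t * K + K * i.
        by rewrite (mulnC K L) (mulnC K i) -mulnDl subnK // mulnDl.
      have e2 : (t + i - L) * K <= t * K by apply: leq_mul => //; lia.
      have -> : a + K * i = (K * L + (t + i - L) * K + (r - 1)) + (K * L + 1) by lia.
      apply: inS.
        apply: (F3 a); [exact: Ha | lia | apply: Pz; lia].
      by rewrite memB; apply/orP; right; lia.
    + have e2 : (t + i) * K = t * K + K * i by rewrite mulnDl (mulnC i K).
      have e3 : (t + i) * K <= K * L - K.
        have : (t + i) * K <= (L - 1) * K by apply: leq_mul => //; lia.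
        by rewrite mulnBl mul1n (mulnC L K).
      have e4 : K <= K * L by rewrite leq_pmulr.
      have -> : a + K * i = ((t + i) * K + r - (T - 1)) +
                            (a + K * i - ((t + i) * K + r - (T - 1))) by lia.
      apply: inS.
        by rewrite mem_cat /alpha_p mem_iota; apply/orP; left; lia.
      by rewrite memB; apply/orP; right; lia.
  - case: (eqVneq b (K * L + T - 1)) => hb.
      by rewrite mem_cat; apply/orP; left; apply/mapP; exists a => //; rewrite hb.
    have -> : a + b = (a - 1) + (b + 1) by lia.
    apply: inS.
      apply: (F3 a); [exact: Ha | lia | ].
      rewrite (_ : a - 1 = K * L + t * K + (r - 1)); last by lia.
      apply: Pz; lia.
    by rewrite memB; apply/orP; right; move/eqP: hb; lia.
have Claim2u : uniq ([seq y + mB | y <- R] ++ undup [seq a + b | a <- A', b <- B]).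
  rewrite cat_uniq undup_uniq andbT map_inj_uniq; last exact: addIn.
  rewrite filter_uniq ?uniq_as //=.
  apply/hasPn => x; rewrite mem_undup => /allpairsP[[a b] [/= Ha Hb ->]].
  apply/negP => /mapP[y hy e].
  move: hy; rewrite mem_filter => /andP[hy1 hy0].
  have yKL : K * L <= y by move: hy0; rewrite /s0 mem_as => /and4P[].
  have ay : a < y.
    move: Ha; rewrite mem_cat => /orP[|].
      rewrite /alpha_p mem_iota => ha.
      have e4 : K <= K * L by rewrite leq_pmulr.
      lia.
    by rewrite mem_filter => /andP[ha1 ha0]; apply: (F2 y a).
  have bm : b <= K * L + T - 1.
    move: Hb; rewrite memB => /orP[|]; last by lia.
    case/mapP => i; rewrite mem_iota => /andP[_ hi] ->.
    have : K * i < K * L by rewrite ltn_pmul2l.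
    lia.
  move: e; rewrite /mB; lia.
have Claim2s : {subset [seq y + mB | y <- R] ++ undup [seq a + b | a <- A', b <- B] <=
    undup [seq a + b | a <- alpha_p K ++ s0, b <- B]}.
  move=> x; rewrite mem_undup mem_cat => /orP[/mapP[y hy ->]|].
    apply: allpairs_f.
      by move: hy; rewrite mem_filter mem_cat => /andP[_ ->]; rewrite orbT.
    by rewrite memB /mB; apply/orP; right; lia.
  rewrite mem_undup => /allpairsP[[a b] [/= Ha Hb ->]]; apply: allpairs_f => //.
  move: Ha; rewrite !mem_cat => /orP[-> //|].
  by rewrite mem_filter => /andP[_ ->]; rewrite orbT.
have h1 : N_GASP K L T r.+1 <= size C + size (undup [seq a + b | a <- A', b <- B]).
  rewrite /N_GASP /alpha -/s1 -/B.
  apply: leq_trans (@size_undup_sub _ _ Claim1) _.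
  apply: leq_trans (size_undup_cat _ _) _.
  by rewrite size_map.
have h2 : size R + size (undup [seq a + b | a <- A', b <- B]) <= N_GASP K L T r.
  rewrite /N_GASP /alpha -/s0 -/B.
  have := uniq_leq_size Claim2u Claim2s.
  by rewrite size_cat size_map.
have h3 : size C <= size R.
  have e := @count_mem_sym _ _ (uniq_as K L T r) (uniq_as K L T r.+1).
  have c1 := count_predC (mem s0) s1.
  have c2 := count_predC (mem s1) s0.
  rewrite (@size_as K L T r hK hr) in c2.
  rewrite (@size_as K L T r.+1 hK (ltn0Sn r)) in c1.
  rewrite /C /R !size_filter.
  have -> : count (fun x => x \notin s0) s1 = count (predC (mem s0)) s1 by [].
  have -> : count (fun x => x \notin s1) s0 = count (predC (mem s1)) s0 by [].
  rewrite -/s0 -/s1 in e.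
  lia.
lia.
Qed.

Theorem lemma2 (K L T : nat) :
  0 < K -> 0 < L -> 0 < T -> L <= K ->
  (* phi = T - 1 - K L + 2 K >= 1, i.e. T + 2K >= KL + 2; then phi = T + 2K - 1 - KL in nat *)
  K * L + 2 <= T + 2 * K ->
  forall r : nat, 1 <= r -> r <= minn K (minn T (T + 2 * K - 1 - K * L)) ->
    N_GASP K L T (minn K (minn T (T + 2 * K - 1 - K * L))) <= N_GASP K L T r.
Proof.
move=> hK hL hT hLK hphi r hr hrm.
set m := minn K (minn T (T + 2 * K - 1 - K * L)) in hrm *.
have H : forall d, r + d <= m -> N_GASP K L T (r + d) <= N_GASP K L T r.
  elim=> [|d IH] h; first by rewrite addn0.
  apply: leq_trans (IH _); last by lia.
  rewrite addnS; apply: step => //; rewrite /m in h; lia.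
have := H (m - r); rewrite (subnKC hrm); apply; exact: leqnn.
Qed.
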